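(* In the setting of the context, there is a constant $N_2>0$ such that for every integer $r\ge r_0$ and all $\epsilon,\epsilon'\in\{-1,1\}$ there is a path in the Cayley graph $\Gamma(G_2,S_2)$ connecting $s_1^{\epsilon r}$ to $s_2^{\epsilon' r}$ which lies outside the open ball $B(e,r)$ and has length at most $N_2r\bigl(f(N_2r)+1\bigr)$.
   Context: $H$ is a finitely presented group with finite generating set $T$, containing a free subgroup $F$ of rank $p$ with free basis $R=\{d_1,\dots,d_p\}\subset T$. $F_x,F_y,F_z$ are free of rank $p$ with bases $R_x=\{x_i\},R_y=\{y_i\},R_z=\{z_i\}$. $G_1=[H\ast_{\langle d_i=x_iy_i^{-1}\rangle}(F_x\times F_y\times F_z)]\times\langle s_1\rangle$; $a_i=x_iz_i$, $b_i=y_iz_i$, $R_{xz}=\{a_i\}$, $R_{yz}=\{b_i\}$; $G_2=\langle G_1,s_2\mid s_2^{-1}a_is_2=b_i,\ 1\le i\le p\rangle$; $S_2=T\cup R_x\cup R_y\cup R_z\cup R_{xz}\cup R_{yz}\cup\{s_1,s_2\}$. $f=\Delta^{-1}$ where $\Delta$ is a non-decreasing bijection of $[0,\infty)$ Lipschitz equivalent to $\mathrm{Dist}_F^H$ (with $\mathrm{Dist}_F^H(n)=\max\{|g|_R:g\in F,|g|_T\le n\}$), $\Delta(r)\ge r$ for $r\ge1$, $f(|g|_R)\le|g|_T$ for $g\in F$; and $D>1$, $r_0\ge1$ are constants such that for each $r\ge r_0$ there is an element $u\in F$ palindromic with respect to $R$ with $r/D\le|u|_R\le r$ and $|u|_T\le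 Df(r)$. (Such data exist under the standing assumption that $\mathrm{Dist}_F^H$ admits an exponentially bounded sequence of palindromic certificates in $F$.) *)

(* Defs.v *)
From mathcomp Require Import all_boot.
From Stdlib Require Import Reals.

Set Implicit Arguments.
Unset Strict Implicit.
Unset Printing Implicit Defensive.

(* A letter over an alphabet A is (a, b) : A * bool; b = true means a^{-1}. *)
Definition letter (A : Type) := (A * bool)%type.
Definition linv (A : Type) (l : letter A) : letter A := (l.1, ~~ l.2).

(* Equality in the group <A | rels>: the congruence on words generated by
   free cancellation and insertion/deletion of relators. *)
Inductive eqv (A : Type) (rels : seq (seq (letter A))) :
    seq (letter A) -> seq (letter A) -> Prop :=
| eqv_refl w : eqv rels w w
| eqv_sym u v : eqv rels u v -> eqv rels v u
| eqv_trans u v w : eqv rels u v -> eqv rels v w -> eqv rels u w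
| eqv_cancel u v (a : letter A) : eqv rels (u ++ a :: linv a :: v) (u ++ v)
| eqv_rel u v r : List.In r rels -> eqv rels (u ++ r ++ v) (u ++ v).

Definition wmap (A B : Type) (phi : B -> A) (w : seq (letter B)) : seq (letter A) :=
  map (fun l => (phi l.1, l.2)) w.

(* is_length phi rels g n : the word length of the element g of <A|rels>
   with respect to the generating set phi(B) is exactly n
   (g is represented by a word over B of length n, and by none shorter). *)
Definition is_length (A B : Type) (phi : B -> A) (rels : seq (seq (letter A)))
    (g : seq (letter A)) (n : nat) : Prop :=
  (exists v : seq (letter B), eqv rels (wmap phi v) g /\ size v = n) /\
  (forall v : seq (letter B), eqv rels (wmap phi v) g -> (n <= size v)%N).

Definition freely_reduced (B : Type) (w : seq (letter B)) : Prop :=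
  forall u v (a : letter B), w <> u ++ a :: linv a :: v.

Inductive gen2 (T : Type) (p : nat) : Type :=
| GT of T
| GX of 'I_p | GY of 'I_p | GZ of 'I_p
| GA of 'I_p (* a_i = x_i z_i *)
| GB of 'I_p (* b_i = y_i z_i *)
| GS1 | GS2.
Arguments GT {T p}. Arguments GX {T p}. Arguments GY {T p}. Arguments GZ {T p}.
Arguments GA {T p}. Arguments GB {T p}. Arguments GS1 {T p}. Arguments GS2 {T p}.

Definition pos (A : Type) (a : A) : letter A := (a, false).
Definition neg (A : Type) (a : A) : letter A := (a, true).
Definition commw (A : Type) (a b : A) : seq (letter A) := [:: neg a; neg b; pos a; pos b].

(* Presentation of G_2 = < G_1, s2 | s2^{-1} a_i s2 = b_i >, where
   G_1 = [H *_{d_i = x_i y_i^{-1}} (F_x x F_y x F_z)] x <s1>,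
   H = < T | relsH >, with the extra generators a_i, b_i defined by
   a_i = x_i z_i, b_i = y_i z_i. *)
Definition rels2 (T : finType) (p : nat) (relsH : seq (seq (letter T)))
    (d : 'I_p -> T) : seq (seq (letter (gen2 T p))) :=
  [seq wmap GT r | r <- relsH] ++
  (* amalgamation d_i = x_i y_i^{-1} *)
  [seq [:: neg (GT (d i)); pos (GX i); neg (GY i)] | i <- enum 'I_p] ++
  (* F_x x F_y x F_z *)
  [seq commw (GX i) (GY j) | i <- enum 'I_p, j <- enum 'I_p] ++
  [seq commw (GX i) (GZ j) | i <- enum 'I_p, j <- enum 'I_p] ++
  [seq commw (GY i) (GZ j) | i <- enum 'I_p, j <- enum 'I_p] ++
  (* direct product with <s1> *)
  [seq commw GS1 (GT t) | t <- enum T] ++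
  [seq commw GS1 (GX i) | i <- enum 'I_p] ++
  [seq commw GS1 (GY i) | i <- enum 'I_p] ++
  [seq commw GS1 (GZ i) | i <- enum 'I_p] ++
  [seq [:: neg (GA i); pos (GX i); pos (GZ i)] | i <- enum 'I_p] ++
  [seq [:: neg (GB i); pos (GY i); pos (GZ i)] | i <- enum 'I_p] ++
  (* HNN relations s2^{-1} a_i s2 = b_i *)
  [seq [:: neg GS2; pos (GA i); pos GS2; neg (GB i)] | i <- enum 'I_p].

(* x^{eps r}, eps = false means +1, eps = true means -1 *)
Definition spow (A : Type) (x : A) (eps : bool) (r : nat) : seq (letter A) :=
  nseq r (x, eps).

(* Main.v *)
Require Import Defs.
From mathcomp Require Import all_boot.
From Stdlib Require Import Reals.
From Stdlib Require Import Setoid Morphisms Lra Psatz.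

Lemma linvK (A : Type) (l : letter A) : linv (linv l) = l.
Proof. by case: l => a b; rewrite /linv /= negbK. Qed.

Section Free.
Variable K : eqType.
Definition Rr (x y : letter K) := y != linv x.
Definition step (s : seq (letter K)) (a : letter K) :=
  if s is c :: s' then (if c == linv a then s' else a :: s) else [:: a].

Lemma linv_eq (x y : letter K) : (x == linv y) = (y == linv x).
Proof. by apply/eqP/eqP => ->; rewrite linvK. Qed.

Lemma linv_neq (x : letter K) : (x == linv x) = false.
Proof. case: x => a b; apply/eqP; rewrite /linv /=; case; by case: b. Qed.

Lemma step_sorted s a : sorted Rr s -> sorted Rr (step s a).
Proof.
case: s => [|c s] //= Hs; case: ifP => H; first exact: path_sorted Hs.
by rewrite /= /Rr [c == _]H Hs.
Qed.

Lemma foldl_sorted s w : sorted Rr s -> sorted Rr (foldl step s w).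
Proof. elim: w s => [|a w IH] s Hs //=; apply: IH; exact: step_sorted. Qed.

Lemma cancel_pair s l : sorted Rr s -> foldl step s [:: l; linv l] = s.
Proof.
case: s => [|c s] /=; first by rewrite linvK eqxx.
case: ifP => H.
  move/eqP: H => ->; case: s => [|e s] //= /andP [He _].
  rewrite linvK; move: He; rewrite /Rr linvK => /negbTE ->. by [].
by rewrite /= linvK eqxx.
Qed.

Lemma push s a t : path Rr a t -> foldl step (a :: s) t = rev t ++ a :: s.
Proof.
elim: t a s => [|b t IH] a s //= /andP [Hab Ht].
rewrite linv_eq (negbTE Hab) IH // rev_cons cat_rcons. by [].
Qed.

Lemma push0 t : sorted Rr t -> foldl step [::] t = rev t.
Proof. case: t => [|a t] //= Ht; rewrite push // rev_cons cats1. by []. Qed.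

Lemma size_step s a : size (step s a) <= (size s).+1.
Proof. case: s => [|c s] //=; case: ifP => _ //=; exact: leqW. Qed.

Lemma size_foldl s w : size (foldl step s w) <= size s + size w.
Proof.
elim: w s => [|a w IH] s /=; first by rewrite addn0.
apply: leq_trans (IH _) _; rewrite addnS -addSn leq_add2r; exact: size_step.
Qed.

Lemma nil_le s t : sorted Rr t -> foldl step s t = [::] -> size t <= size s.
Proof.
elim: t s => [|a t IH] s //= Ht.
case: s => [|c s] /=.
  by rewrite push //; case: (rev t).
case: ifP => H.
  move=> /(IH _ (path_sorted Ht)); by [].
by rewrite push //; case: (rev t).
Qed.

Lemma nseq_step n x : step (nseq n x) x = nseq n.+1 x.
Proof. case: n => [|n] //=; by rewrite linv_neq. Qed.

Lemma foldl_nseq n m x : foldl step (nseq n x) (nseq m x) = nseq (m + n) x.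
Proof. elim: m n => [|m IH] n //=; by rewrite nseq_step IH addnS. Qed.
End Free.

Section Pi.
Variables (A : Type) (K : eqType) (pio : A -> option K).
Definition piL (l : letter A) : seq (letter K) :=
  if pio l.1 is Some k then [:: (k, l.2)] else [::].
Definition piW (w : seq (letter A)) := flatten (map piL w).
Lemma piW_cat u v : piW (u ++ v) = piW u ++ piW v.
Proof. by rewrite /piW map_cat flatten_cat. Qed.

Lemma piW_cons l w : piW (l :: w) = piL l ++ piW w.
Proof. by []. Qed.

Lemma neutral_pi l s : sorted (@Rr K) s -> foldl (@step K) s (piL l ++ piL (linv l)) = s.
Proof.
case: l => a b; rewrite /piL /=; case: (pio a) => [k|] //= Hs.
have := @cancel_pair K s (k, b) Hs; rewrite /linv /=; by [].
Qed.

Lemma eqv_pi rels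
  (Hr : forall r, List.In r rels -> forall s, sorted (@Rr K) s -> foldl (@step K) s (piW r) = s)
  u v : eqv rels u v -> forall s, sorted (@Rr K) s ->
        foldl (@step K) s (piW u) = foldl (@step K) s (piW v).
Proof.
elim=> {u v} [u|u v _ IH|u v w _ IH1 _ IH2|u v a|u v r Hr'] s Hs.
- by [].
- by rewrite IH.
- by rewrite IH1 // IH2.
- rewrite !piW_cat !piW_cons !foldl_cat -[X in foldl _ X (piW v)]foldl_cat neutral_pi //.
  exact: foldl_sorted.
- rewrite !piW_cat !foldl_cat [foldl _ (foldl _ s (piW u)) (piW r)]Hr //; exact: foldl_sorted.
Qed.

Lemma size_piW w : size (piW w) <= size w.
Proof.
elim: w => [|l w IH] //; rewrite piW_cons size_cat /= -add1n leq_add //.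
rewrite /piL; by case: (pio _).
Qed.

Lemma lower_pi rels
  (Hr : forall r, List.In r rels -> forall s, sorted (@Rr K) s -> foldl (@step K) s (piW r) = s)
  v V : eqv rels v V -> size (foldl (@step K) [::] (piW V)) <= size v.
Proof.
move=> H; rewrite -(@eqv_pi rels Hr v V H) //.
apply: leq_trans (size_foldl _ _ _) _; exact: size_piW.
Qed.

Definition allNone (w : seq (letter A)) := all (fun l => pio l.1 == None) w.
Lemma piW_none w : allNone w -> piW w = [::].
Proof.
elim: w => [|l w IH] //= /andP [/eqP H Hw]; by rewrite /piW /= /piL H /= -/(piW w) IH.
Qed.
End Pi.
Arguments Rr {K}. Arguments step {K}.

Definition winv {A : Type} (w : seq (letter A)) := rev (map (@linv A) w).

Section Reduced.
Variable K : eqType.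
Lemma Rr_sym (x y : letter K) : Rr x y = Rr y x.
Proof. by rewrite /Rr linv_eq. Qed.

Lemma fr_sorted (w : seq (letter K)) : freely_reduced w -> sorted (@Rr K) w.
Proof.
elim: w => [|a w IH] //= Hf.
case: w IH Hf => [|b w] IH Hf //=.
apply/andP; split.
  apply/negP => /eqP Hb; apply: (Hf [::] w a); by rewrite Hb.
apply: IH => u v x E; apply: (Hf (a :: u) v x); by rewrite E.
Qed.

Lemma sorted_fr (w : seq (letter K)) : sorted (@Rr K) w -> freely_reduced w.
Proof.
move=> Hs u v a E; subst w.
elim: u Hs => [|c u IH] /=.
  by rewrite /Rr eqxx.
move=> Hs; apply: IH; exact: path_sorted Hs.
Qed.

Lemma sorted_rev (s : seq (letter K)) : sorted (@Rr K) s -> sorted (@Rr K) (rev s).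
Proof. rewrite rev_sorted; apply: sub_sorted => x y; by rewrite Rr_sym. Qed.


Lemma sorted_winv (s : seq (letter K)) : sorted (@Rr K) s -> sorted (@Rr K) (winv s).
Proof.
move=> Hs; rewrite /winv; apply: sorted_rev; rewrite sorted_map.
apply: sub_sorted Hs => x y; rewrite /relpre /Rr /= => H.
apply/negP => /eqP E; move/negP: H; apply; by rewrite -[y]linvK E linvK.
Qed.
End Reduced.

Section Group.
Variables (A : Type) (rels : seq (seq (letter A))).
Notation eqv := (eqv rels).
Lemma eqv_appl w u v : eqv u v -> eqv (w ++ u) (w ++ v).
Proof.
elim=> {u v} [u|u v _ IH|u v x _ IH1 _ IH2|u v a|u v r Hr].
- exact: eqv_refl.
- exact: eqv_sym.
- exact: eqv_trans IH1 IH2.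
- by rewrite !catA; apply: eqv_cancel.
- by rewrite !catA -(catA _ r); apply: eqv_rel.
Qed.
Lemma eqv_appr w u v : eqv u v -> eqv (u ++ w) (v ++ w).
Proof.
elim=> {u v} [u|u v _ IH|u v x _ IH1 _ IH2|u v a|u v r Hr].
- exact: eqv_refl.
- exact: eqv_sym.
- exact: eqv_trans IH1 IH2.
- by rewrite -!catA /=; apply: eqv_cancel.
- by rewrite -!catA; apply: eqv_rel.
Qed.
Arguments eqv_appl w [u v]. Arguments eqv_appr w [u v].
#[local] Instance eqv_Equiv : Equivalence eqv.
Proof. split; [exact: eqv_refl | exact: eqv_sym | exact: eqv_trans]. Qed.
#[local] Instance cat_Proper : Proper (eqv ==> eqv ==> eqv) (@cat (letter A)).
Proof. move=> u u' H v v' H'. exact: (eqv_trans (eqv_appr v H) (eqv_appl u' H')). Qed.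
#[local] Instance cons_Proper a : Proper (eqv ==> eqv) (cons a).
Proof. move=> u u' H. exact: (eqv_appl [:: a] H). Qed.

Lemma canc u v a : eqv (u ++ a :: linv a :: v) (u ++ v).
Proof. exact: eqv_cancel. Qed.
Lemma canc' u v a : eqv (u ++ linv a :: a :: v) (u ++ v).
Proof. have := eqv_cancel rels u v (linv a); by rewrite linvK. Qed.
Lemma rel0 r : List.In r rels -> eqv r [::].
Proof. move=> H; have := eqv_rel [::] [::] H; by rewrite /= cats0. Qed.

Lemma winv_cons (a : letter A) (w : seq (letter A)) : winv (a :: w) = winv w ++ [:: linv a].
Proof. by rewrite /winv /= rev_cons cats1. Qed.
Lemma winv_cat (u v : seq (letter A)) : winv (u ++ v) = winv v ++ winv u.
Proof. by rewrite /winv map_cat rev_cat. Qed.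
Lemma winvK (w : seq (letter A)) : winv (winv w) = w.
Proof. elim: w => [|a w IH] //; by rewrite winv_cons winv_cat IH /winv /= linvK. Qed.
Lemma size_winv (w : seq (letter A)) : size (winv w) = size w.
Proof. by rewrite /winv size_rev size_map. Qed.

Lemma winvr (w : seq (letter A)) : eqv (w ++ winv w) [::].
Proof.
elim: w => [|a w IH] //=; first reflexivity.
rewrite winv_cons catA IH /=. exact: (canc [::] [::] a).
Qed.
Lemma winvl (w : seq (letter A)) : eqv (winv w ++ w) [::].
Proof. have := winvr (winv w); by rewrite winvK. Qed.
Lemma eqv_winv u v : eqv u v -> eqv (winv u) (winv v).
Proof.
move=> H.
transitivity ((winv u ++ v) ++ winv v).
  by rewrite -catA winvr cats0; reflexivity.
by rewrite (eqv_appl (winv u) (eqv_sym H)) winvl; reflexivity.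
Qed.

Arguments eqv_winv [u v].
Definition conj (t l m : letter A) := eqv [:: l; t] [:: t; m].
Definition comm (l m : letter A) := conj m l l.

Lemma conj_inv t l m : conj t l m -> conj t (linv l) (linv m).
Proof.
rewrite /conj => H.
transitivity ([:: linv l] ++ [:: t; m] ++ [:: linv m]).
  symmetry; exact: (canc [:: linv l; t] [::] m).
rewrite -H /=; exact: (canc' [::] [:: t; linv m] l).
Qed.

Lemma conj_invt t l m : conj t l m -> conj (linv t) m l.
Proof.
rewrite /conj => H.
transitivity ([:: linv t] ++ [:: t; m] ++ [:: linv t]).
  symmetry; exact: (canc' [::] [:: m; linv t] t).
rewrite -H /=; exact: (canc [:: linv t; l] [::] t).
Qed.

Lemma comm_sym l m : comm l m -> comm m l.
Proof. rewrite /comm /conj => H; by symmetry. Qed.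
Lemma comm_invl l m : comm l m -> comm (linv l) m.
Proof. exact: conj_inv. Qed.
Lemma comm_invr l m : comm l m -> comm l (linv m).
Proof. exact: conj_invt. Qed.

Arguments conj_inv [t l m]. Arguments conj_invt [t l m]. Arguments comm_sym [l m].
Arguments comm_invl [l m]. Arguments comm_invr [l m].
Lemma comm_all (a b : A) : comm (a, false) (b, false) -> forall s s', comm (a, s) (b, s').
Proof.
move=> H [|] [|].
- exact (comm_invl (comm_invr H)).
- exact (comm_invl H).
- exact (comm_invr H).
- exact: H.
Qed.

Lemma conj_word (I : Type) (f g : I -> letter A) t (H : forall i, conj t (f i) (g i)) w :
  eqv (map f w ++ [:: t]) (t :: map g w).
Proof.
elim: w => [|a w IH] /=; first reflexivity.
rewrite IH. exact: (eqv_appr (map g w) (H a)).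
Qed.

Lemma comm_words (I J : Type) (f : I -> letter A) (g : J -> letter A)
  (H : forall i j, comm (f i) (g j)) u v :
  eqv (map f u ++ map g v) (map g v ++ map f u).
Proof.
elim: u => [|a u IH] /=; first by rewrite cats0; reflexivity.
rewrite IH -/([:: f a] ++ map g v ++ map f u) catA.
have -> : eqv ([:: f a] ++ map g v) (map g v ++ [:: f a]).
  symmetry; apply: conj_word => j; rewrite /conj; symmetry; exact: H.
rewrite -catA; reflexivity.
Qed.

Lemma def_letter l w : eqv (linv l :: w) [::] -> eqv [:: l] w.
Proof.
move=> H; transitivity ([:: l] ++ (linv l :: w)).
  by rewrite H; reflexivity.
exact: (canc [::] w l).
Qed.

Lemma comm_rel (a b : A) : eqv (commw a b) [::] -> comm (a, false) (b, false).
Proof.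
move=> H; rewrite /comm /conj; symmetry.
transitivity ([:: (b, false); (a, false)] ++ commw a b).
  by rewrite H; reflexivity.
rewrite /commw /=.
transitivity ([:: (b,false)] ++ [:: (b, true); (a, false); (b, false)]).
  exact: (canc [:: (b, false)] [:: (b, true); (a, false); (b, false)] (a, false)).
exact: (canc [::] [:: (a, false); (b, false)] (b, false)).
Qed.

Lemma comm_via2 l m x z : eqv [:: m] [:: x; z] -> comm l x -> comm l z -> comm l m.
Proof.
rewrite /comm /conj => H Hx Hz.
rewrite -[[:: m; l]]/([:: m] ++ [:: l]) -[[:: l; m]]/([:: l] ++ [:: m]) H /=.
rewrite -[[:: l, x & [:: z]]]/([:: l; x] ++ [:: z]) Hx /=.
rewrite -[[:: x, l & [:: z]]]/([:: x] ++ [:: l; z]) Hz. reflexivity.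
Qed.

Lemma def_neg m x z : eqv [:: m] [:: x; z] -> comm x z -> eqv [:: linv m] [:: linv x; linv z].
Proof.
move=> H Hc; have := eqv_winv H; rewrite /winv /= => E.
transitivity [:: linv z; linv x]; first exact: E.
have := comm_invl (comm_invr Hc); rewrite /comm /conj => E2; by symmetry.
Qed.

Lemma split_word (I : Type) (gM gP gQ : letter I -> letter A)
  (H : forall l, eqv [:: gM l] [:: gP l; gQ l])
  (Hc : forall l l', comm (gP l) (gQ l')) u :
  eqv (map gM u) (map gP u ++ map gQ u).
Proof.
elim: u => [|a u IH] /=; first reflexivity.
rewrite -[gM a :: _]/([:: gM a] ++ map gM u) H IH /=.
rewrite -[gQ a :: _]/(map gQ [:: a] ++ map gP u ++ map gQ u) catA.
have Hc' : forall i j, comm (gQ i) (gP j) by move=> i j; apply: comm_sym; exact: Hc.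
rewrite (@comm_words _ _ gQ gP Hc' [:: a] u) -catA; reflexivity.
Qed.

Lemma lift (B : Type) (phi : B -> A) relsB
  (Hin : forall r, List.In r relsB -> List.In (wmap phi r) rels) u v :
  Defs.eqv relsB u v -> eqv (wmap phi u) (wmap phi v).
Proof.
elim=> {u v} [u|u v _ IH|u v x _ IH1 _ IH2|u v a|u v r Hr].
- reflexivity.
- by symmetry.
- by rewrite IH1.
- rewrite /wmap !map_cat /=. exact: canc.
- rewrite /wmap !map_cat. apply: eqv_rel. exact: Hin.
Qed.

Lemma red_eqv (K : eqType) (phi : K -> A) s w :
  eqv (wmap phi (rev (foldl (@step K) s w))) (wmap phi (rev s ++ w)).
Proof.
elim: w s => [|a w IH] s /=; first by rewrite cats0; reflexivity.
rewrite IH.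
case: s => [|c s] /=; first reflexivity.
case: ifP => [/eqP Hc|_]; last by rewrite [rev (a :: _)]rev_cons cat_rcons; reflexivity.
rewrite [rev (c :: s)]rev_cons cat_rcons Hc /wmap !map_cat /=. symmetry.
exact: (canc' _ _ (phi a.1, a.2)).
Qed.
End Group.

Notation nneg := (@Defs.neg _).
Notation npos := (@Defs.pos _).

#[global] Instance eqv_Equiv_g A rels : Equivalence (@eqv A rels).
Proof. split; [exact: eqv_refl | exact: eqv_sym | exact: eqv_trans]. Qed.
#[global] Instance cat_Proper_g A rels : Proper (@eqv A rels ==> @eqv A rels ==> @eqv A rels) (@cat (letter A)).
Proof. move=> u u' H v v' H'. exact: (eqv_trans (@eqv_appr A rels v _ _ H) (@eqv_appl A rels u' _ _ H')). Qed.
#[global] Instance cons_Proper_g A rels a : Proper (@eqv A rels ==> @eqv A rels) (cons a).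
Proof. move=> u u' H. exact: (@eqv_appl A rels [:: a] _ _ H). Qed.

Arguments eqv_winv [A rels u v].
Arguments conj_inv [A rels t l m]. Arguments conj_invt [A rels t l m]. Arguments comm_sym [A rels l m].
Arguments comm_invl [A rels l m]. Arguments comm_invr [A rels l m].

Lemma In_mem (X : eqType) (x : X) s : x \in s -> List.In x s.
Proof. elim: s => [|y s IH] //=; rewrite inE => /orP [/eqP ->|/IH]; by [left|right]. Qed.

Lemma In_ap (X Y Z : Type) (f : X -> Y -> Z) x y s t :
  List.In x s -> List.In y t -> List.In (f x y) [seq f x y | x <- s, y <- t].
Proof.
elim: s => [|a s IH] //= [<-|Hx] Hy; apply: List.in_or_app; [left|right; exact: IH].
exact: List.in_map.
Qed.

Lemma In_ap_inv (X Y Z : Type) (f : X -> Y -> Z) s t r :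
  List.In r [seq f x y | x <- s, y <- t] -> exists x y, r = f x y.
Proof.
elim: s => [|a s IH] //= /List.in_app_iff [|/IH //].
move=> /List.in_map_iff [y [<- _]]; by exists a, y.
Qed.

Arguments In_ap_inv {X Y Z f s t r}.
Section G2.
Variables (T : finType) (p : nat) (relsH : seq (seq (letter T))) (d : 'I_p -> T).
Notation gen := (gen2 T p).
Notation rels := (rels2 relsH d).
Notation eqv := (eqv rels).

Lemma In_ord (i : 'I_p) : List.In i (enum 'I_p).
Proof. apply: In_mem; by rewrite mem_enum. Qed.
Lemma In_T (t : T) : List.In t (enum T).
Proof. apply: In_mem; by rewrite mem_enum. Qed.

Ltac here := apply: List.in_or_app; left.

Lemma r_amalg i : List.In [:: nneg (GT (d i)); npos (GX i); nneg (GY i)] rels.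
Proof. do 1 (apply: List.in_or_app; right); here; apply: (List.in_map (fun i => _)); exact: In_ord. Qed.


Lemma r_xy i j : List.In (commw (GX i) (GY j)) rels.
Proof. do 2 (apply: List.in_or_app; right); here; apply: (@In_ap _ _ _ (fun i j => commw (GX i) (GY j))); exact: In_ord. Qed.
Lemma r_xz i j : List.In (commw (GX i) (GZ j)) rels.
Proof. do 3 (apply: List.in_or_app; right); here; apply: (@In_ap _ _ _ (fun i j => commw (GX i) (GZ j))); exact: In_ord. Qed.
Lemma r_yz i j : List.In (commw (GY i) (GZ j)) rels.
Proof. do 4 (apply: List.in_or_app; right); here; apply: (@In_ap _ _ _ (fun i j => commw (GY i) (GZ j))); exact: In_ord. Qed.
Lemma r_s1x i : List.In (commw GS1 (GX i)) rels.
Proof. do 6 (apply: List.in_or_app; right); here; apply: (List.in_map (fun i => _)); exact: In_ord. Qed.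
Lemma r_s1y i : List.In (commw GS1 (GY i)) rels.
Proof. do 7 (apply: List.in_or_app; right); here; apply: (List.in_map (fun i => _)); exact: In_ord. Qed.
Lemma r_s1z i : List.In (commw GS1 (GZ i)) rels.
Proof. do 8 (apply: List.in_or_app; right); here; apply: (List.in_map (fun i => _)); exact: In_ord. Qed.
Lemma r_a i : List.In [:: nneg (GA i); npos (GX i); npos (GZ i)] rels.
Proof. do 9 (apply: List.in_or_app; right); here; apply: (List.in_map (fun i => _)); exact: In_ord. Qed.
Lemma r_b i : List.In [:: nneg (GB i); npos (GY i); npos (GZ i)] rels.
Proof. do 10 (apply: List.in_or_app; right); here; apply: (List.in_map (fun i => _)); exact: In_ord. Qed.
Lemma r_hnn i : List.In [:: nneg GS2; npos (GA i); npos GS2; nneg (GB i)] rels.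
Proof. do 11 (apply: List.in_or_app; right); apply: (List.in_map (fun i => _)); exact: In_ord. Qed.
Lemma r_H r : List.In r relsH -> List.In (wmap GT r) rels.
Proof. move=> H; here; exact: (List.in_map (fun r => wmap GT r)). Qed.

Lemma rels2_ind (P : seq (letter gen) -> Prop)
  (H0 : forall r, P (wmap GT r))
  (H1 : forall i, P [:: nneg (GT (d i)); npos (GX i); nneg (GY i)])
  (H2 : forall i j, P (commw (GX i) (GY j)))
  (H3 : forall i j, P (commw (GX i) (GZ j)))
  (H4 : forall i j, P (commw (GY i) (GZ j)))
  (H5 : forall t, P (commw GS1 (GT t)))
  (H6 : forall i, P (commw GS1 (GX i)))
  (H7 : forall i, P (commw GS1 (GY i)))
  (H8 : forall i, P (commw GS1 (GZ i)))
  (H9 : forall i, P [:: nneg (GA i); npos (GX i); npos (GZ i)])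
  (H10 : forall i, P [:: nneg (GB i); npos (GY i); npos (GZ i)])
  (H11 : forall i, P [:: nneg GS2; npos (GA i); npos GS2; nneg (GB i)]) :
  forall r, List.In r rels -> P r.
Proof.
move=> r; rewrite /rels2.
move=> /List.in_app_iff [/List.in_map_iff [x [<- _]]|]; first exact: H0.
move=> /List.in_app_iff [/List.in_map_iff [x [<- _]]|]; first exact: H1.
move=> /List.in_app_iff [/In_ap_inv [x [y ->]]|]; first exact: H2.
move=> /List.in_app_iff [/In_ap_inv [x [y ->]]|]; first exact: H3.
move=> /List.in_app_iff [/In_ap_inv [x [y ->]]|]; first exact: H4.
move=> /List.in_app_iff [/List.in_map_iff [x [<- _]]|]; first exact: H5.
move=> /List.in_app_iff [/List.in_map_iff [x [<- _]]|]; first exact: H6.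
move=> /List.in_app_iff [/List.in_map_iff [x [<- _]]|]; first exact: H7.
move=> /List.in_app_iff [/List.in_map_iff [x [<- _]]|]; first exact: H8.
move=> /List.in_app_iff [/List.in_map_iff [x [<- _]]|]; first exact: H9.
move=> /List.in_app_iff [/List.in_map_iff [x [<- _]]|]; first exact: H10.
move=> /List.in_map_iff [x [<- _]]; exact: H11.
Qed.

End G2.
Arguments allNone {A K}. Arguments piW {A K}. Arguments piL {A K}.

Lemma nseqSr (X : Type) n (x : X) : nseq n.+1 x = nseq n x ++ [:: x].
Proof. by elim: n => [|n IH] //=; rewrite -IH. Qed.

Lemma takeCat (X : Type) k (s1 s2 : seq X) : take k (s1 ++ s2) = take k s1 ++ take (k - size s1) s2.
Proof.
rewrite take_cat; case: ifP => H.
  have -> : k - size s1 = 0 by apply/eqP; rewrite subn_eq0 ltnW.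
  by rewrite take0 cats0.
rewrite [take k s1]take_oversize //; by rewrite leqNgt H.
Qed.

Lemma size_flatten_nseq (X : Type) n (x : seq X) : size (flatten (nseq n x)) = n * size x.
Proof. elim: n => [|n IH] //=; by rewrite size_cat IH mulSn. Qed.

Section AllNone.
Variables (A : Type) (K : eqType) (pio : A -> option K).
Lemma allNone_cat u v : allNone pio (u ++ v) = allNone pio u && allNone pio v.
Proof. exact: all_cat. Qed.
Lemma allNone_take k w : allNone pio w -> allNone pio (take k w).
Proof. by rewrite -{1}(cat_take_drop k w) allNone_cat => /andP []. Qed.
Lemma allNone_winv w : allNone pio w -> allNone pio (winv w).
Proof. by rewrite /allNone /winv all_rev all_map. Qed.
Lemma allNone_flat n w : allNone pio w -> allNone pio (flatten (nseq n w)).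
Proof. move=> H; elim: n => [|n IH] //=; by rewrite allNone_cat H IH. Qed.
Lemma allNone_nseq n l : pio l.1 = None -> allNone pio (nseq n l).
Proof. by move=> H; rewrite /allNone all_nseq /= H eqxx orbT. Qed.
End AllNone.

Lemma cp_tf (K : eqType) s (k : K) : sorted Rr s -> foldl step s [:: (k, true); (k, false)] = s.
Proof. exact: (@cancel_pair K s (k, true)). Qed.
Lemma cp_ft (K : eqType) s (k : K) : sorted Rr s -> foldl step s [:: (k, false); (k, true)] = s.
Proof. exact: (@cancel_pair K s (k, false)). Qed.

Section G2b.
Variables (T : finType) (p : nat) (relsH : seq (seq (letter T))) (d : 'I_p -> T).
Notation gen := (gen2 T p).
Notation rels := (rels2 relsH d).
Notation eqv := (eqv rels).

Definition pioZ (g : gen) : option 'I_p :=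
  match g with GZ i | GA i | GB i => Some i | _ => None end.
Definition pioS1 (g : gen) : option unit := if g is GS1 then Some tt else None.
Definition pioS2 (g : gen) : option unit := if g is GS2 then Some tt else None.

Ltac solve_inv :=
  intros; rewrite /piW /piL /=;
  first [ by [] | (apply: cp_tf; assumption) | (apply: cp_ft; assumption) ].

Lemma gt_none (K : eqType) (pio : gen -> option K) (H : forall t, pio (GT t) = None) r s :
  foldl step s (piW pio (wmap GT r)) = s.
Proof.
rewrite piW_none //; rewrite /allNone /wmap all_map; apply/allP => x _ /=; by rewrite H.
Qed.

Lemma invZ r : List.In r rels -> forall s, sorted Rr s -> foldl step s (piW pioZ r) = s.
Proof.
move: r; apply: (@rels2_ind T p relsH d (fun r => forall s, sorted Rr s -> foldl step s (piW pioZ r) = s)); try solve_inv.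
move=> r0 s _; exact: gt_none.
Qed.
Lemma invS1 r : List.In r rels -> forall s, sorted Rr s -> foldl step s (piW pioS1 r) = s.
Proof.
move: r; apply: (@rels2_ind T p relsH d (fun r => forall s, sorted Rr s -> foldl step s (piW pioS1 r) = s)); try solve_inv.
move=> r0 s _; exact: gt_none.
Qed.
Lemma invS2 r : List.In r rels -> forall s, sorted Rr s -> foldl step s (piW pioS2 r) = s.
Proof.
move: r; apply: (@rels2_ind T p relsH d (fun r => forall s, sorted Rr s -> foldl step s (piW pioS2 r) = s)); try solve_inv.
move=> r0 s _; exact: gt_none.
Qed.
End G2b.
Arguments rel0 {A rels r}.

Arguments comm {A} rels l m. Arguments conj {A} rels t l m.

Lemma nseq_canc (A : Type) rels n (x : letter A) : eqv rels (nseq n x ++ nseq n (linv x)) [::].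
Proof.
elim: n => [|n IH]; first reflexivity.
rewrite nseqSr -catA /=.
rewrite (@canc A rels (nseq n x) (nseq n (linv x)) x). exact: IH.
Qed.

Lemma blocks (A : Type) rels (U V : seq (letter A)) t n :
  eqv rels (U ++ t :: V) (t :: U) ->
  eqv rels (U ++ flatten (nseq n (t :: V))) (nseq n t ++ U).
Proof.
move=> H; elim: n => [|n IH] /=; first by rewrite cats0; reflexivity.
rewrite -cat_cons catA H /= IH; reflexivity.
Qed.

Lemma chain (A : Type) rels (U V : seq (letter A)) s t L n :
  eqv rels (nseq n s ++ U ++ nseq n L) U ->
  eqv rels (U ++ t :: V) (t :: U) ->
  eqv rels (nseq n s ++ (U ++ (nseq n L ++ (flatten (nseq n (t :: V)) ++ winv U)))) (nseq n t).
Proof.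
move=> H1 H2.
transitivity ((nseq n s ++ U ++ nseq n L) ++ (flatten (nseq n (t :: V)) ++ winv U)).
  by rewrite -!catA; reflexivity.
rewrite H1 catA (@blocks A rels U V t n H2) -catA winvr cats0; reflexivity.
Qed.

Lemma s1cancel (A I : Type) rels (g : I -> letter A) S (Hg : forall l, comm rels (g l) (linv S)) u n :
  eqv rels (nseq n S ++ map g u ++ nseq n (linv S)) (map g u).
Proof.
have := @comm_words A rels I unit g (fun _ => linv S) (fun i _ => Hg i) u (nseq n tt).
rewrite map_nseq => ->. rewrite catA nseq_canc; reflexivity.
Qed.

Section G2c.
Variables (T : finType) (p : nat) (relsH : seq (seq (letter T))) (d : 'I_p -> T).
Notation gen := (gen2 T p).
Notation rels := (rels2 relsH d).
Notation eqv := (eqv rels).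

Definition gA (l : letter 'I_p) : letter gen := (GA l.1, l.2).
Definition gB (l : letter 'I_p) : letter gen := (GB l.1, l.2).
Definition gX (l : letter 'I_p) : letter gen := (GX l.1, l.2).
Definition gY (l : letter 'I_p) : letter gen := (GY l.1, l.2).
Definition gZ (l : letter 'I_p) : letter gen := (GZ l.1, l.2).
Definition gYn (l : letter 'I_p) : letter gen := (GY l.1, ~~ l.2).
Definition gD (l : letter 'I_p) : letter gen := (GT (d l.1), l.2).

Lemma cXY l l' : comm rels (gX l) (gY l').
Proof. case: l => i s; case: l' => j s'; apply: comm_all; apply: comm_rel; apply: rel0; exact: r_xy. Qed.
Lemma cXZ l l' : comm rels (gX l) (gZ l').
Proof. case: l => i s; case: l' => j s'; apply: comm_all; apply: comm_rel; apply: rel0; exact: r_xz. Qed.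
Lemma cYZ l l' : comm rels (gY l) (gZ l').
Proof. case: l => i s; case: l' => j s'; apply: comm_all; apply: comm_rel; apply: rel0; exact: r_yz. Qed.
Lemma cXYn l l' : comm rels (gX l) (gYn l').
Proof. case: l' => j s'; exact: (cXY l (j, ~~ s')). Qed.

Lemma dA i : eqv [:: npos (GA i)] [:: npos (GX i); npos (GZ i)].
Proof. exact (@def_letter gen rels (npos (GA i)) _ (rel0 (@r_a T p relsH d i))). Qed.
Lemma dB i : eqv [:: npos (GB i)] [:: npos (GY i); npos (GZ i)].
Proof. exact (@def_letter gen rels (npos (GB i)) _ (rel0 (@r_b T p relsH d i))). Qed.
Lemma dD i : eqv [:: npos (GT (d i))] [:: npos (GX i); nneg (GY i)].
Proof. exact (@def_letter gen rels (npos (GT (d i))) _ (rel0 (@r_amalg T p relsH d i))). Qed.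

Lemma sA l : eqv [:: gA l] [:: gX l; gZ l].
Proof. case: l => i [|]; [exact (@def_neg gen rels _ _ _ (dA i) (cXZ (i,false) (i,false))) | exact (dA i)]. Qed.
Lemma sB l : eqv [:: gB l] [:: gY l; gZ l].
Proof. case: l => i [|]; [exact (@def_neg gen rels _ _ _ (dB i) (cYZ (i,false) (i,false))) | exact (dB i)]. Qed.
Lemma sD l : eqv [:: gD l] [:: gX l; gYn l].
Proof. case: l => i [|]; [exact (@def_neg gen rels _ _ _ (dD i) (cXY (i,false) (i,true))) | exact (dD i)]. Qed.

Lemma splitA u : eqv (map gA u) (map gX u ++ map gZ u).
Proof. exact: (@split_word gen rels _ gA gX gZ sA cXZ u). Qed.
Lemma splitB u : eqv (map gB u) (map gY u ++ map gZ u).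
Proof. exact: (@split_word gen rels _ gB gY gZ sB cYZ u). Qed.
Lemma splitD u : eqv (map gD u) (map gX u ++ map gYn u).
Proof. exact: (@split_word gen rels _ gD gX gYn sD cXYn u). Qed.

Lemma cS1A e l : comm rels (gA l) (GS1, e).
Proof.
apply: comm_sym; case: l => i s /=; apply: comm_all.
apply: (@comm_via2 gen rels _ _ _ _ (dA i)); apply: comm_rel; apply: rel0; [exact: r_s1x | exact: r_s1z].
Qed.
Lemma cS1B e l : comm rels (gB l) (GS1, e).
Proof.
apply: comm_sym; case: l => i s /=; apply: comm_all.
apply: (@comm_via2 gen rels _ _ _ _ (dB i)); apply: comm_rel; apply: rel0; [exact: r_s1y | exact: r_s1z].
Qed.

Lemma hnn i : conj rels (npos (@GS2 T p)) (npos (@GA T p i)) (npos (@GB T p i)).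
Proof.
rewrite /conj.
transitivity [:: npos (@GA T p i); npos (@GS2 T p); nneg (@GB T p i); npos (@GB T p i)].
  symmetry; exact (@canc' gen rels [:: npos (@GA T p i); npos (@GS2 T p)] [::] (npos (@GB T p i))).
transitivity [:: npos (@GS2 T p); nneg (@GS2 T p); npos (@GA T p i); npos (@GS2 T p); nneg (@GB T p i); npos (@GB T p i)].
  symmetry; exact (@canc gen rels [::] _ (npos (@GS2 T p))).
exact (eqv_rel [:: npos (@GS2 T p)] [:: npos (@GB T p i)] (@r_hnn T p relsH d i)).
Qed.

Lemma conjS2 l : conj rels (npos GS2) (gA l) (gB l).
Proof. case: l => i [|]; [exact (conj_inv (hnn i)) | exact (hnn i)]. Qed.
Lemma conjS2' l : conj rels (nneg GS2) (gB l) (gA l).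
Proof. exact (conj_invt (conjS2 l)). Qed.

Lemma palY u : rev u = u -> map gYn u = winv (map gY u).
Proof.
move=> Hu; rewrite /winv -map_comp.
have -> : map (linv (A:=gen) \o gY) u = map gYn u by apply: eq_map => [[i s]].
by rewrite -map_rev Hu.
Qed.

Lemma convBA u : rev u = u -> eqv (map gB u ++ map gD u) (map gA u).
Proof.
move=> Hu.
rewrite splitB splitD splitA (palY u Hu).
set Y := map gY u; set Z := map gZ u; set X := map gX u.
have E1 : eqv (Y ++ Z) (Z ++ Y) by exact: (@comm_words gen rels _ _ gY gZ cYZ u u).
have E2 : eqv (Y ++ X) (X ++ Y).
  apply: (@comm_words gen rels _ _ gY gX) => l l'; apply: comm_sym; exact: cXY.
have E3 : eqv (Z ++ X) (X ++ Z).
  apply: (@comm_words gen rels _ _ gZ gX) => l l'; apply: comm_sym; exact: cXZ.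
transitivity (Z ++ (Y ++ (X ++ winv Y))).
  by rewrite E1 -catA; reflexivity.
transitivity (Z ++ (X ++ (Y ++ winv Y))).
  by rewrite [Y ++ (X ++ _)]catA E2 -catA; reflexivity.
rewrite winvr cats0 E3; reflexivity.
Qed.

Lemma stepF u V : rev u = u -> eqv V (map gD u) ->
  eqv (map gA u ++ npos GS2 :: V) (npos GS2 :: map gA u).
Proof.
move=> Hu HV.
rewrite -cat1s catA (@conj_word gen rels _ gA gB _ conjS2 u) HV /=.
rewrite -cat1s (convBA u Hu); reflexivity.
Qed.

Lemma stepT u V : rev u = u -> eqv V (map gD u) ->
  eqv (map gB u ++ nneg GS2 :: winv V) (nneg GS2 :: map gB u).
Proof.
move=> Hu HV.
rewrite -cat1s catA (@conj_word gen rels _ gB gA _ conjS2' u) /=.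
apply: cons_Proper_g.
rewrite -(convBA u Hu) -HV -catA winvr cats0; reflexivity.
Qed.
End G2c.

Lemma piW_nseq (A : Type) (K : eqType) (pio : A -> option K) n (l : letter A) k :
  pio l.1 = Some k -> piW pio (nseq n l) = nseq n (k, l.2).
Proof. move=> H; elim: n => [|n IH] //=; by rewrite piW_cons IH /piL H. Qed.

Lemma piW_blocks (A : Type) (K : eqType) (pio : A -> option K) n (t : letter A) V k :
  pio t.1 = Some k -> allNone pio V -> piW pio (flatten (nseq n (t :: V))) = nseq n (k, t.2).
Proof.
move=> H HV; elim: n => [|n IH] //.
rewrite -[flatten (nseq n.+1 _)]/((t :: V) ++ flatten (nseq n (t :: V))).
by rewrite piW_cat piW_cons IH (@piW_none _ _ pio V HV) /piL H.
Qed.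

Lemma wmap_winv (A B : Type) (phi : B -> A) w : wmap phi (winv w) = winv (wmap phi w).
Proof. rewrite /wmap /winv map_rev -!map_comp; congr rev; by apply: eq_map => [[a b]]. Qed.

Lemma size_le_len (T : finType) p (relsH : seq (seq (letter T))) (d : 'I_p -> T)
  (HF : forall w : seq (letter 'I_p),
        freely_reduced w -> w <> [::] -> ~ eqv relsH (wmap d w) [::])
  u k : freely_reduced u -> is_length d relsH (wmap d u) k -> size u <= k.
Proof.
move=> Hfr [[v0 [Hv0 Hs]] _].
have E : eqv relsH (wmap d (v0 ++ winv u)) [::].
  rewrite /wmap map_cat -/(wmap d v0) -/(wmap d (winv u)) wmap_winv Hv0 winvr; reflexivity.
set st := foldl step [::] (v0 ++ winv u).
have E2 : eqv relsH (wmap d (rev st)) [::].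
  rewrite /st (@red_eqv T relsH _ d [::] (v0 ++ winv u)) /=; exact: E.
have Hsr : sorted Rr (rev st) by apply: sorted_rev; apply: foldl_sorted.
have Hst : st = [::].
  case Est: (rev st) => [|x y]; first by rewrite -(revK st) Est.
  exfalso; apply: (HF (x :: y)); [by rewrite -Est; apply: sorted_fr | by [] | by rewrite -Est].
move: Hst; rewrite /st foldl_cat => /nil_le.
have Hw : sorted Rr (winv u) by apply: sorted_winv; apply: fr_sorted.
move=> /(_ Hw); rewrite size_winv => H.
apply: leq_trans H _; rewrite -Hs; exact: (@size_foldl _ [::] v0).
Qed.

Section Core.
Variables (T : finType) (p : nat) (relsH : seq (seq (letter T))) (d : 'I_p -> T).
Notation gen := (gen2 T p).
Notation rels := (rels2 relsH d).
Notation pS1 := (@pioS1 T p). Notation pS2 := (@pioS2 T p). Notation pZ := (@pioZ T p).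

Lemma lb_core (u : seq (letter 'I_p)) (U0 V : seq (letter gen)) (eps e2 : bool) r
  (Hu : sorted Rr u) (Hru : r <= size u)
  (H1 : allNone pS1 U0) (H2 : allNone pS2 U0) (H3 : piW pZ U0 = u)
  (H4 : allNone pZ V) (H5 : allNone pS2 V) :
  let c := U0 ++ (nseq r (@GS1 T p, ~~ eps) ++ (flatten (nseq r ((@GS2 T p, e2) :: V)) ++ winv U0)) in
  forall k, k <= size c -> forall w, eqv rels w (nseq r (@GS1 T p, eps) ++ take k c) -> r <= size w.
Proof.
move=> c k Hk w Hw.
set M := nseq r (@GS1 T p, ~~ eps).
set B := flatten (nseq r ((@GS2 T p, e2) :: V)).
have Ec : c = U0 ++ ((M ++ B) ++ winv U0) by rewrite /c catA.
rewrite Ec takeCat takeCat in Hw.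
have HS1 : allNone pS1 (winv U0) by exact: allNone_winv.
have HS2 : allNone pS2 (winv U0) by exact: allNone_winv.
have HZM : allNone pZ (M ++ B).
  rewrite allNone_cat; apply/andP; split; first by apply: allNone_nseq.
  apply: allNone_flat => /=; by rewrite H4.
case: (leqP k (size U0)) => Hk1.
  have := @lower_pi _ _ pS1 rels (@invS1 T p relsH d) _ _ Hw.
  have -> : k - size U0 = 0 by apply/eqP; rewrite subn_eq0.
  rewrite take0 sub0n take0 /= cats0 piW_cat (@piW_nseq _ _ pS1 r (@GS1 T p, eps) tt) //.
  rewrite (@piW_none _ _ pS1 (take k U0)) ?allNone_take // cats0.
  have := @foldl_nseq _ 0 r (tt, eps); rewrite /= addn0 => ->; by rewrite size_nseq.
case: (leqP (k - size U0) (size (M ++ B))) => Hk2.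
  have := @lower_pi _ _ pZ rels (@invZ T p relsH d) _ _ Hw.
  have -> : k - size U0 - size (M ++ B) = 0 by apply/eqP; rewrite subn_eq0.
  rewrite take0 cats0 take_oversize ?(ltnW Hk1) //.
  rewrite piW_cat piW_cat H3 (@piW_none _ _ pZ (take _ (M ++ B))) ?allNone_take //.
  rewrite (@piW_none _ _ pZ (nseq r _)) ?allNone_nseq // cats0 /= push0 // size_rev.
  move=> H; exact: leq_trans Hru H.
have := @lower_pi _ _ pS2 rels (@invS2 T p relsH d) _ _ Hw.
rewrite take_oversize ?(ltnW Hk1) // take_oversize ?(ltnW Hk2) //.
rewrite !piW_cat (@piW_none _ _ pS2 (nseq r _)) ?allNone_nseq //.
rewrite (@piW_none _ _ pS2 U0) // (@piW_none _ _ pS2 M) ?allNone_nseq //.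
rewrite (@piW_none _ _ pS2 (take _ _)) ?allNone_take //.
rewrite /B (@piW_blocks _ _ pS2 r (@GS2 T p, e2) V tt) //= cats0.
have := @foldl_nseq _ 0 r (tt, e2); rewrite /= addn0 => ->; by rewrite size_nseq.
Qed.
End Core.

Theorem lemma4p2
  (T : finType) (relsH : seq (seq (letter T))) (p : nat) (d : 'I_p -> T)
  (Delta f : R -> R) (D r0 : R)
  (HF : forall w : seq (letter 'I_p),
        freely_reduced w -> w <> [::] -> ~ eqv relsH (wmap d w) [::])
  (HDpos : forall x, (0 <= x)%R -> (0 <= Delta x)%R)
  (HDmono : forall x y, (0 <= x)%R -> (x <= y)%R -> (Delta x <= Delta y)%R)
  (HDinj : forall x y, (0 <= x)%R -> (0 <= y)%R -> Delta x = Delta y -> x = y)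
  (HDsurj : forall y, (0 <= y)%R -> exists x, (0 <= x)%R /\ Delta x = y)
  (Hf : forall y, (0 <= y)%R -> (0 <= f y)%R /\ Delta (f y) = y)
  (HLip : exists C : nat, (0 < C)%N /\ forall n : nat,
     (forall (w : seq (letter 'I_p)) (k : nat),
        is_length d relsH (wmap d w) k ->
        (exists v : seq (letter T), eqv relsH v (wmap d w) /\ (size v <= n)%N) ->
        (INR k <= INR C * Delta (INR C * INR n))%R) /\
     (exists (w : seq (letter 'I_p)) (k : nat),
        is_length d relsH (wmap d w) k /\
        (exists v : seq (letter T), eqv relsH v (wmap d w) /\ (size v <= C * n)%N) /\
        (Delta (INR n) <= INR C * INR k)%R))
  (HDge : forall x, (1 <= x)%R -> (x <= Delta x)%R)
  (HfRT : forall (w : seq (letter 'I_p)) (k m : nat),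
     is_length d relsH (wmap d w) k -> is_length (@id T) relsH (wmap d w) m ->
     (f (INR k) <= INR m)%R)
  (HD : (1 < D)%R) (Hr0 : (1 <= r0)%R)
  (Hpal : forall r : R, (r0 <= r)%R ->
     exists u : seq (letter 'I_p),
       freely_reduced u /\ rev u = u /\
       (exists k : nat, is_length d relsH (wmap d u) k /\
          (r / D <= INR k)%R /\ (INR k <= r)%R) /\
       (exists v : seq (letter T), eqv relsH v (wmap d u) /\
          (INR (size v) <= D * f r)%R)) :
  exists N2 : R, (0 < N2)%R /\
    forall (r : nat) (eps eps' : bool), (r0 <= INR r)%R ->
      exists c : seq (letter (gen2 T p)),
        eqv (rels2 relsH d) (spow GS1 eps r ++ c) (spow GS2 eps' r) /\
        (forall k : nat, (k <= size c)%N ->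
           forall v : seq (letter (gen2 T p)),
             eqv (rels2 relsH d) v (spow GS1 eps r ++ take k c) -> (r <= size v)%N) /\
        (INR (size c) <= N2 * INR r * (f (N2 * INR r) + 1))%R.
Proof.
have fmono : forall y1 y2, (0 <= y1)%R -> (y1 <= y2)%R -> (f y1 <= f y2)%R.
  move=> y1 y2 H1 H2; case: (Rle_dec (f y1) (f y2)) => [//|H].
  have [F1 E1] := Hf y1 H1; have [F2 E2] : (0 <= f y2)%R /\ Delta (f y2) = y2.
    apply: Hf; lra.
  have H3 : (Delta (f y2) <= Delta (f y1))%R by apply: HDmono; lra.
  rewrite E1 E2 in H3.
  have E : y1 = y2 by lra.
  rewrite E in H; lra.
exists (2 * D + 2)%R; split; first lra.
move=> r eps eps' Hr.
have Hr1 : (1 <= INR r)%R by lra.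
have HrD : (r0 <= D * INR r)%R by nra.
have [u [Hfr [Hpu [[k [Hk [Hk1 Hk2]]] [v [Hv Hsv]]]]]] := Hpal _ HrD.
have Hku : (k <= size u)%N by apply: (proj2 Hk); apply: eqv_refl.
have Huk : (size u <= k)%N := @size_le_len T p relsH d HF u k Hfr Hk.
have Hrk : (r <= k)%N.
  apply/leP; apply: INR_le.
  have E : (D * INR r / D = INR r)%R by field; lra.
  by rewrite E in Hk1.
have HV : eqv (rels2 relsH d) (wmap GT v) (map (@gD T p d) u).
  have := @lift _ (rels2 relsH d) T GT relsH (@r_H T p relsH d) _ _ Hv.
  by rewrite /wmap -map_comp.
pose U0 := if eps' then map (@gB T p) u else map (@gA T p) u.
pose V' := if eps' then winv (wmap (@GT T p) v) else wmap (@GT T p) v.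
have P1 : eqv (rels2 relsH d) (nseq r (@GS1 T p, eps) ++ U0 ++ nseq r (linv (@GS1 T p, eps))) U0.
  rewrite /U0; case: (eps'); apply: s1cancel => l; [exact: cS1B | exact: cS1A].
have P2 : eqv (rels2 relsH d) (U0 ++ (@GS2 T p, eps') :: V') ((@GS2 T p, eps') :: U0).
  rewrite /U0 /V'; case: (eps'); [exact: stepT | exact: stepF].
have P3 : allNone (@pioS1 T p) U0 /\ allNone (@pioS2 T p) U0 /\ piW (@pioZ T p) U0 = u /\ size U0 = size u.
  rewrite /U0 /allNone; case: (eps'); rewrite !all_map size_map; (split; [|split; [|split]]) => //;
  try (by apply/allP => x _);
  elim: (u) => [|[i s] w IH] //=; by rewrite piW_cons IH.
have P4 : allNone (@pioZ T p) V' /\ allNone (@pioS2 T p) V' /\ size V' = size v.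
  rewrite /V' /allNone; case: (eps'); rewrite ?/winv ?all_rev ?size_rev !all_map !size_map;
  (split; [|split]) => //; by apply/allP => x _.
have [Q1 [Q2 [Q3 Q4]]] := P3.
have [R1 [R2 R3]] := P4.
exists (U0 ++ (nseq r (@GS1 T p, ~~ eps) ++ (flatten (nseq r ((@GS2 T p, eps') :: V')) ++ winv U0))).
split; [|split].
- rewrite /spow; exact: chain.
- move=> kk Hkk w Hw.
  exact (@lb_core T p relsH d u U0 V' eps eps' r (@fr_sorted _ u Hfr) (leq_trans Hrk Hku) Q1 Q2 Q3 R1 R2 kk Hkk w Hw).
- rewrite !size_cat size_nseq size_flatten_nseq size_winv /= Q4 R3.
  rewrite -!plusE -!multE !plus_INR mult_INR S_INR.
  have Hsu : (INR (size u) <= D * INR r)%R.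
    apply: Rle_trans Hk2; apply: le_INR; exact/leP.
  have HDr : (0 <= D * INR r)%R by nra.
  have [F0p _] := Hf _ HDr.
  have HN : (0 <= (2 * D + 2) * INR r)%R by nra.
  have [Fp _] := Hf _ HN.
  have HFF : (f (D * INR r) <= f ((2 * D + 2) * INR r))%R by apply: fmono; nra.
  set F0 := f (D * INR r)%R in Hsv F0p HFF *.
  set F := f ((2 * D + 2) * INR r)%R in Fp HFF *.
  have h1 : (INR r * INR (size v) <= INR r * (D * F0))%R by apply: Rmult_le_compat_l; lra.
  have h2 : (INR r * (D * F0) <= INR r * (D * F))%R by apply: Rmult_le_compat_l; nra.
  have h3 : (INR r * (D * F) <= INR r * ((2 * D + 2) * F))%R by apply: Rmult_le_compat_l; nra.
  nra.
Qed.
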